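(* Let $d=\{0,\dots,c-1\}$ and let $\tilde f$ be a real-valued function on row-stochastic matrices $p\in[0,1]^{n\times c}$ that is entry-wise concave, i.e., $\sum_{r\in d}p_{ir}\tilde f(\operatorname{der}(i,r;p))\le\tilde f(p)$ for all such $p$ and all $i\in[n]$. Let $p_{\mathrm{init}}$ be row-stochastic. Consider greedy derandomization: starting from $p_{\mathrm{cur}}=p_{\mathrm{init}}$, repeatedly choose $(i^*,x^* )\in\arg\min_{(i,x)\in[n]\times d}\tilde f(\operatorname{der}(i,x;p_{\mathrm{cur}}))$ and set $p_{\mathrm{cur}}\leftarrow\operatorname{der}(i^*,x^*;p_{\mathrm{cur}})$. Then there is a finite sequence of such greedy steps (with ties broken suitably) ending at $p_{\mathrm{final}}$ such that (1) every row of $p_{\mathrm{final}}$ is an indicator vector (so $p_{\mathrm{final}}$ corresponds to a point of $d^n$); (2) $\tilde f(p_{\mathrm{final}})\le\tilde f(p_{\mathrm{init}})$; (3) $\tilde f(p_{\mathrm{final}})\le\min_{(i,x)\in[n]\times d}\tilde f(\operatorname{der}(i,x;p_{\mathrm{final}}))$.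
   Context: For $p\in[0,1]^{n\times c}$, $i\in[n]$, $x\in d$, $\operatorname{der}(i,x;p)$ is the matrix equal to $p$ except that its $i$-th row is replaced by the indicator vector of $x$ (entry $1$ in column $x$, $0$ elsewhere). A matrix is row-stochastic if all entries lie in $[0,1]$ and each row sums to $1$. *)

(* Defs.v *)
From HB Require Import structures.
From mathcomp Require Import all_boot all_order all_algebra.
From mathcomp Require Import reals.
Set Implicit Arguments. Unset Strict Implicit. Unset Printing Implicit Defensive.
Import Order.TTheory GRing.Theory Num.Theory.
Local Open Scope ring_scope.

Definition row_stochastic (R : realType) (n c : nat) (p : 'M[R]_(n, c)) : Prop :=
  (forall i j, 0 <= p i j /\ p i j <= 1) /\
  (forall i, \sum_(j < c) p i j = 1).

Definition der (R : realType) (n c : nat) (i : 'I_n) (x : 'I_c)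
    (p : 'M[R]_(n, c)) : 'M[R]_(n, c) :=
  \matrix_(k < n, j < c) (if k == i then (j == x)%:R else p k j).

Definition entrywise_concave (R : realType) (n c : nat) (f : 'M[R]_(n, c) -> R)
  : Prop :=
  forall p, row_stochastic p ->
    forall i : 'I_n, \sum_(r < c) p i r * f (der i r p) <= f p.

Fixpoint greedy_steps (R : realType) (n c : nat) (f : 'M[R]_(n, c) -> R)
    (p : 'M[R]_(n, c)) (s : seq ('I_n * 'I_c)) : Prop :=
  match s with
  | [::] => True
  | (i, x) :: s' =>
      (forall (j : 'I_n) (y : 'I_c), f (der i x p) <= f (der j y p)) /\
      greedy_steps f (der i x p) s'
  end.

Fixpoint run_steps (R : realType) (n c : nat) (p : 'M[R]_(n, c))
    (s : seq ('I_n * 'I_c)) : 'M[R]_(n, c) :=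
  match s with
  | [::] => p
  | (i, x) :: s' => run_steps (der i x p) s'
  end.

Definition integral_rows (R : realType) (n c : nat) (p : 'M[R]_(n, c)) : Prop :=
  forall i : 'I_n, exists x : 'I_c, forall j : 'I_c, p i j = (j == x)%:R.

(* Main.v *)
Require Import Defs.
From HB Require Import structures.
From mathcomp Require Import all_boot all_order all_algebra.
From mathcomp Require Import reals.
Import Order.TTheory GRing.Theory Num.Theory.
Local Open Scope ring_scope.

Lemma exists_min (R : realType) (T : finType) (t0 : T) (F : T -> R) :
  exists t, forall u, F t <= F u.
Proof.
case: (@arg_minP _ R T t0 predT F isT) => t _ H.
by exists t => u; apply: H.
Qed.

Lemma find_r (R : realType) (c : nat) (q : 'I_c -> R) (F : 'I_c -> R) (v : R) :
  (forall j, 0 <= q j) -> \sum_(j < c) q j = 1 ->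
  \sum_(r < c) q r * F r <= v -> exists r, 0 < q r /\ F r <= v.
Proof.
move=> q0 q1 Hs.
case: (boolP [exists r, (0 < q r) && (F r <= v)]).
  by case/existsP => r /andP [] *; exists r.
move/existsPn => Hn; exfalso.
have [r0 Hr0] : exists r0, 0 < q r0.
  case: (boolP [exists r, 0 < q r]); first by case/existsP => r ?; exists r.
  move/existsPn => Hz; have : \sum_(j < c) q j = 0.
    by apply: big1 => j _; apply/eqP; rewrite eq_le q0 andbT leNgt Hz.
  by rewrite q1 => /eqP; rewrite oner_eq0.
have Hlt : \sum_(r < c) q r * v < \sum_(r < c) q r * F r.
  rewrite (bigD1 r0) //= [X in _ < X](bigD1 r0) //=.
  apply: ltr_leD.
    rewrite ltr_pM2l //; move: (Hn r0); rewrite Hr0 /= -ltNge; done.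
  apply: ler_sum => r _; have := q0 r; rewrite le0r => /orP [/eqP -> | qp].
    by rewrite !mul0r.
  by rewrite ler_pM2l //; move: (Hn r); rewrite qp /= -ltNge => /ltW.
move: Hlt; rewrite -big_distrl /= q1 mul1r => Hlt.
by move: (lt_le_trans Hlt Hs); rewrite ltxx.
Qed.

Section Main.
Variables (R : realType) (n c : nat) (f : 'M[R]_(n, c) -> R) (p0 : 'M[R]_(n, c)).
Hypothesis fconc : entrywise_concave f.
Hypothesis p0rs : row_stochastic p0.

Definition St := {ffun 'I_n -> option 'I_c}.

Definition mat (g : St) : 'M[R]_(n, c) :=
  \matrix_(k < n, j < c) (match g k with Some x => (j == x)%:R | None => p0 k j end).

Definition upd (g : St) (i : 'I_n) (x : 'I_c) : St :=
  [ffun k => if k == i then Some x else g k].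

Lemma mat_upd g i x : mat (upd g i x) = der i x (mat g).
Proof.
apply/matrixP => k j; rewrite !mxE ffunE.
by case: (k == i); rewrite ?mxE.
Qed.

Lemma ind_sum (x : 'I_c) : \sum_(j < c) ((j == x)%:R : R) = 1.
Proof.
rewrite (bigD1 x) //= eqxx big1 ?addr0 // => j /negbTE ->; done.
Qed.

Lemma mat_rs g : row_stochastic (mat g).
Proof.
case: p0rs => H1 H2; split.
  move=> i j; rewrite mxE; case: (g i) => [x|]; last exact: H1.
  by case: (j == x); rewrite ?ler01 ?lexx.
move=> i; under eq_bigr do rewrite mxE.
by case: (g i) => [x|]; [apply: ind_sum | apply: H2].
Qed.

Definition Sset (g : St) := [set g' : St | f (mat g') < f (mat g)].
Definition Nset (g : St) := [set i | g i == None].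
Definition meas (g : St) := (#|Sset g| * n.+1 + #|Nset g|)%N.

Lemma Nset_upd g i x : Nset (upd g i x) \subset Nset g.
Proof.
apply/subsetP => k; rewrite !inE ffunE; by case: (k == i).
Qed.

Definition goal (p : 'M[R]_(n, c)) :=
  exists s : seq ('I_n * 'I_c),
    greedy_steps f p s /\
    let p_final := run_steps p s in
    integral_rows p_final /\
    f p_final <= f p /\
    (forall (i : 'I_n) (x : 'I_c), f p_final <= f (der i x p_final)).

Lemma gstep g i x :
  (forall j y, f (der i x (mat g)) <= f (der j y (mat g))) ->
  f (der i x (mat g)) <= f (mat g) ->
  goal (mat (upd g i x)) -> goal (mat g).
Proof.
rewrite mat_upd => Hg Hle [s [Hs [Hi [Hf Hm]]]].
exists ((i, x) :: s); split; first by split.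
by split=> //; split=> //; apply: le_trans Hle.
Qed.

Lemma key k : forall g, (meas g < k)%N -> goal (mat g).
Proof.
elim: k => [//|k IH] g Hk.
case: (boolP [exists ix : 'I_n * 'I_c, f (der ix.1 ix.2 (mat g)) < f (mat g)]).
  case/existsP => ix0 Hix0.
  have [[i x] Hmin] := @exists_min R _ ix0 (fun ix => f (der ix.1 ix.2 (mat g))).
  have Hlt : f (der i x (mat g)) < f (mat g) := le_lt_trans (Hmin ix0) Hix0.
  apply: (gstep g i x) => //.
  - by move=> j y; apply: (Hmin (j, y)).
  - exact: ltW.
  apply: IH; rewrite -ltnS; apply: leq_trans Hk; rewrite ltnS /meas.
  have Hp : Sset (upd g i x) \proper Sset g.
    apply/properP; split.
      apply/subsetP => h; rewrite !inE mat_upd => /lt_trans; apply; done.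
    by exists (upd g i x); rewrite !inE mat_upd ?Hlt ?ltxx.
  have := proper_card Hp => Hc.
  have HN : (#|Nset (upd g i x)| < n.+1)%N.
    by rewrite ltnS; apply: leq_trans (max_card _) _; rewrite card_ord.
  have H1 : (#|Sset (upd g i x)| * n.+1 + #|Nset (upd g i x)| < (#|Sset (upd g i x)|).+1 * n.+1)%N.
    by rewrite mulSn addnC ltn_add2r.
  have H2 : ((#|Sset (upd g i x)|).+1 * n.+1 <= #|Sset g| * n.+1)%N.
    by rewrite leq_mul2r Hc orbT.
  apply: leq_trans H1 _; apply: leq_trans H2 _; exact: leq_addr.
move/existsPn => Hge.
have Hge' : forall j y, f (mat g) <= f (der j y (mat g)).
  by move=> j y; move: (Hge (j, y)); rewrite -leNgt.
case: (boolP [exists i, g i == None]); last first.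
  move/existsPn => HS; exists [::]; split=> //=; split; last by split.
  move=> i; move: (HS i); case E: (g i) => [x|] // _.
  by exists x => j; rewrite mxE E.
case/existsP => i /eqP Hi.
have [rs1 rs2] := mat_rs g.
have [r [_ Hr]] := @find_r R c (fun j => mat g i j) (fun r => f (der i r (mat g))) (f (mat g)) (fun j => (rs1 i j).1) (rs2 i) (@fconc (mat g) (mat_rs g) i).
apply: (gstep g i r) => //.
  by move=> j y; apply: le_trans Hr (Hge' j y).
have Heq : f (der i r (mat g)) = f (mat g) by apply/eqP; rewrite eq_le Hr Hge'.
apply: IH; rewrite -ltnS; apply: leq_trans Hk; rewrite ltnS /meas.
have -> : Sset (upd g i r) = Sset g.
  by apply/setP => h; rewrite !inE mat_upd Heq.
rewrite ltn_add2l; apply: proper_card; apply/properP; split; first exact: Nset_upd.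
by exists i; rewrite !inE ?Hi // ffunE eqxx.
Qed.

End Main.

Theorem mainTheorem14 (R : realType) (n c : nat) (f : 'M[R]_(n, c) -> R)
    (p_init : 'M[R]_(n, c)) :
  entrywise_concave f ->
  row_stochastic p_init ->
  exists s : seq ('I_n * 'I_c),
    greedy_steps f p_init s /\
    let p_final := run_steps p_init s in
    integral_rows p_final /\
    f p_final <= f p_init /\
    (forall (i : 'I_n) (x : 'I_c), f p_final <= f (der i x p_final)).
Proof.
move=> Hc Hrs.
have E : @mat R n c p_init [ffun _ => None] = p_init.
  by apply/matrixP => k j; rewrite mxE ffunE.
have := @key R n c f p_init Hc Hrs _ [ffun _ => None] (ltnSn _).
by rewrite E.
Qed.
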